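(* Let $q$ be a prime power, $2\le k\le n$, and let $\mathcal{C}\subseteq\mathbb{F}_q^n$ be a linear code of dimension $k$ and minimum Hamming distance $d$. Then $$\mathbb{E}[\mathcal{C}] = n(H_n - H_{d-1}) - \sum_{s=k}^{n-d}\frac{\alpha(\mathcal{C},s)}{\binom{n-1}{s}}.$$
   Context: $H_m=\sum_{i=1}^m 1/i$, with $H_0=0$. $\mathbb{E}[\mathcal{C}]$ is $\mathbb{E}[G]$ for any generator matrix $G\in\mathbb{F}_q^{k\times n}$ of $\mathcal{C}$, the expected number of draws when columns of $G$ are drawn independently and uniformly at random from its $n$ columns (with repetition) until the drawn columns span $\mathbb{F}_q^k$. Writing $g_j$ for the $j$-th column of a generator matrix, $\alpha(\mathcal{C},s)=|\{S\subseteq\{1,\dots,n\}: |S|=s,\ \langle g_j:j\in S\rangle=\mathbb{F}_q^k\}|$, the number of information sets of $\mathcal{C}$ of size $s$. *)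

(* Defs.v *)
From HB Require Import structures.
From mathcomp Require Import all_boot all_order all_algebra all_field.
From mathcomp Require Import all_classical all_reals all_analysis.
Set Implicit Arguments. Unset Strict Implicit. Unset Printing Implicit Defensive.
Import Order.TTheory GRing.Theory Num.Theory.
Local Open Scope ring_scope.

Section Defs.
Variables (F : finFieldType) (k n : nat).

Definition hweight (c : 'rV[F]_n) : nat := #|[set j : 'I_n | c 0 j != 0]|.

Definition is_min_dist (G : 'M[F]_(k, n)) (d : nat) : Prop :=
  (exists u : 'rV[F]_k, u *m G != 0 /\ hweight (u *m G) = d) /\
  (forall u : 'rV[F]_k, u *m G != 0 -> (d <= hweight (u *m G))%N).

Definition cols_span (G : 'M[F]_(k, n)) (s : seq 'I_n) : bool :=
  row_full (\sum_(j <- s) <<(col j G)^T>>)%MS.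

Definition alpha (G : 'M[F]_(k, n)) (s : nat) : nat :=
  #|[set S : {set 'I_n} | (#|S| == s) && cols_span G (enum S)]|.

Definition nb_first_span (G : 'M[F]_(k, n)) (t : nat) : nat :=
  #|[set f : t.-tuple 'I_n |
      cols_span G f && ~~ cols_span G (take t.-1 f)]|.

End Defs.

(* P(T = t) where T is the number of uniform draws until spanning *)
Definition prob_first_span {R : realType} (F : finFieldType) (k n : nat)
  (G : 'M[F]_(k, n)) (t : nat) : R :=
  (nb_first_span G t)%:R / (n ^ t)%:R.

(* t * P(T = t); E[G] is the sum of the series of these terms *)
Definition exp_term {R : realType} (F : finFieldType) (k n : nat)
  (G : 'M[F]_(k, n)) (t : nat) : R :=
  t%:R * prob_first_span G t.

Definition harmH {R : realType} (m : nat) : R :=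
  \sum_(1 <= i < m.+1) (i%:R)^-1.

(* Main.v *)
Require Import Defs.
From HB Require Import structures.
From mathcomp Require Import all_boot all_order all_algebra all_field.
From mathcomp Require Import all_classical all_reals all_analysis.
From mathcomp Require Import zify ring lra.
Import Order.TTheory GRing.Theory Num.Theory numFieldNormedType.Exports.
Set Implicit Arguments. Unset Strict Implicit. Unset Printing Implicit Defensive.

Section LinAlg.
Variables (F : finFieldType) (k n : nat) (G : 'M[F]_(k, n)).
Local Open Scope ring_scope.
Let X (j : 'I_n) : 'M[F]_k := <<(col j G)^T>>%MS.

Lemma sum_seq_sub (s : seq 'I_n) m (B : 'M[F]_(m, k)) :
  (forall j, j \in s -> (X j <= B)%MS) -> (\sum_(j <- s) X j <= B)%MS.
Proof.
elim: s => [|a s IH] H; first by rewrite big_nil sub0mx.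
rewrite big_cons addsmx_sub H ?mem_head //= IH // => j js.
by apply: H; rewrite inE js orbT.
Qed.

Lemma sub_sum_seq (s : seq 'I_n) j : j \in s -> (X j <= \sum_(i <- s) X i)%MS.
Proof.
elim: s => [|a s IH] //; rewrite inE big_cons => /orP [/eqP ->|js].
  exact: addsmxSl.
exact: submx_trans (IH js) (addsmxSr _ _).
Qed.

Lemma cols_span_sub (s1 s2 : seq 'I_n) :
  {subset s1 <= s2} -> cols_span G s1 -> cols_span G s2.
Proof.
rewrite /cols_span -!col_leq_rank => H r1.
apply: leq_trans r1 _; apply: mxrankS; apply: sum_seq_sub => j js.
exact: sub_sum_seq (H _ js).
Qed.

Lemma cols_span_eq (s1 s2 : seq 'I_n) :
  s1 =i s2 -> cols_span G s1 = cols_span G s2.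
Proof.
move=> E; apply/idP/idP; apply: cols_span_sub => j; by rewrite E.
Qed.

Lemma rank_sum_seq (s : seq 'I_n) : (\rank (\sum_(j <- s) X j) <= size s)%N.
Proof.
elim: s => [|a s IH]; first by rewrite big_nil mxrank0.
rewrite big_cons /=; apply: leq_trans (mxrank_adds_leqif _ _) _.
by rewrite -add1n leq_add // /X genmxE rank_leq_row.
Qed.

Lemma cols_span_size (s : seq 'I_n) : cols_span G s -> (k <= size s)%N.
Proof.
rewrite /cols_span -col_leq_rank => H; exact: leq_trans H (rank_sum_seq s).
Qed.

Lemma not_span_codeword (s : seq 'I_n) : \rank G = k -> ~~ cols_span G s ->
  exists u : 'rV[F]_k, u *m G != 0 /\ forall j, j \in s -> (u *m G) 0 j = 0.
Proof.
move=> rG; rewrite /cols_span -col_leq_rank -ltnNge => H.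
set M := (\sum_(j <- s) X j)%MS.
have : cokermx M != 0.
  rewrite -mxrank_eq0 mxrank_coker -lt0n subn_gt0 /M /X /=; exact: H.
move: (mulmx_coker M); move: (cokermx M) => C MC0.
case/matrix0Pn => i [l Hil].
exists (col l C)^T; split.
  rewrite mulmx_free_eq0; last by rewrite /row_free rG.
  have Hil' : (col l C)^T 0 i != 0 by rewrite !mxE in Hil *.
  by apply: contraNneq Hil' => ->; rewrite mxE.
move=> j js.
have sj : ((col j G)^T <= M)%MS.
  by apply: submx_trans (sub_sum_seq js); rewrite /X genmxE.
have E0 : (col j G)^T *m C = 0.
  by case/submxP: sj => D ->; rewrite -mulmxA MC0 mulmx0.
transitivity (((col j G)^T *m C) 0 l); last by rewrite E0 mxE.
by rewrite !mxE; apply: eq_bigr => i0 _; rewrite !mxE mulrC.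
Qed.
End LinAlg.

Lemma card_setsum (T : finType) (P : pred T) : #|[set x | P x]| = \sum_x (P x : nat).
Proof. by rewrite -sum1dep_card big_mkcond; apply: eq_bigr => x _; case: (P x). Qed.

Lemma sum_rcons (T : finType) t (Fn : t.+1.-tuple T -> nat) :
  \sum_(f : t.+1.-tuple T) Fn f = \sum_(x : T) \sum_(g : t.-tuple T) Fn [tuple of rcons g x].
Proof.
rewrite pair_big /=.
pose h (p : T * t.-tuple T) : t.+1.-tuple T := [tuple of rcons p.2 p.1].
have hinj : injective h.
  move=> [x g] [y g'] /(congr1 val) /= /rcons_inj [/val_inj -> ->] //.
have hbij : bijective h.
  by apply: (inj_card_bij hinj); rewrite card_prod !card_tuple expnS.
by apply: (reindex h); apply: onW_bij.
Qed.

Section Counting.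
Variables (F : finFieldType) (k n : nat) (G : 'M[F]_(k, n)).

Definition sset (s : seq 'I_n) : {set 'I_n} := [set x in s].
Definition spanS (S : {set 'I_n}) := cols_span G (enum S).
Definition NS t := #|[set f : t.-tuple 'I_n | ~~ cols_span G f]|.
Definition surjc (S : {set 'I_n}) t := #|[set f : t.-tuple 'I_n | sset f == S]|.

Lemma cols_span_set s : cols_span G s = spanS (sset s).
Proof. by apply: cols_span_eq => j; rewrite mem_enum inE. Qed.

Lemma sset_rcons g x : sset (rcons g x) = x |: sset g.
Proof. by apply/setP => y; rewrite !inE mem_rcons inE. Qed.

Lemma surj0 S : surjc S 0 = (S == finset.set0).
Proof.
rewrite /surjc card_setsum (big_pred1 [tuple]) ?big_pred1_eq //=.
  have -> : sset [tuple] = finset.set0 by apply/setP => x; rewrite !inE.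
  by rewrite eq_sym.
by move=> f /=; apply/esym/eqP; apply: tuple0.
Qed.

Lemma ind_split (T : finType) (x : T) (A S : {set T}) : x \in S ->
  ((x |: A == S) : nat) = (A == S) + (A == S :\ x).
Proof.
move=> xS; case: (boolP (x \in A)) => xA.
  have -> : x |: A = A by apply/setP=> y; rewrite !inE; case: eqP => // ->.
  have -> : (A == S :\ x) = false.
    by apply/eqP => E; move: xA; rewrite E !inE eqxx.
  by rewrite addn0.
have -> : (A == S) = false by apply/eqP => E; move: xA; rewrite E xS.
rewrite add0n; congr nat_of_bool; apply/eqP/eqP => [<-|->].
  by rewrite finset.setU1K.
by rewrite finset.setD1K.
Qed.

Lemma surjc_rec S t :
  surjc S t.+1 = #|S| * surjc S t + \sum_(x in S) surjc (S :\ x) t.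
Proof.
rewrite /surjc card_setsum sum_rcons (bigID (mem S)) /=.
rewrite [X in _ + X]big1 ?addn0; last first.
  move=> x xS; apply: big1 => g _ /=; rewrite sset_rcons.
  by case: eqP => // E; move: xS; rewrite -E !inE eqxx.
rewrite -sum_nat_const -big_split /=; apply: eq_bigr => x xS.
rewrite !card_setsum -big_split /=; apply: eq_bigr => g _.
by rewrite sset_rcons ind_split.
Qed.

Lemma NS_dec t : NS t = \sum_(S | ~~ spanS S) surjc S t.
Proof.
rewrite /NS card_setsum /surjc.
under [RHS]eq_bigr do rewrite card_setsum.
rewrite exchange_big /=; apply: eq_bigr => f _.
rewrite big_mkcond (bigD1 (sset f)) //= eqxx big1 ?addn0.
  by rewrite cols_span_set; case: (spanS _).
by move=> S; rewrite eq_sym => /negbTE ->; case: ifP.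
Qed.

Lemma first_rec t : nb_first_span G t.+1 + NS t.+1 = n * NS t.
Proof.
rewrite /nb_first_span /NS !card_setsum !sum_rcons.
rewrite (_ : n * _ = \sum_(x : 'I_n) \sum_(g : t.-tuple 'I_n) (~~ cols_span G g : nat)); last first.
  by rewrite sum_nat_const card_ord.
rewrite -big_split /=.
apply: eq_bigr => x _; rewrite -big_split /=; apply: eq_bigr => g _ /=.
rewrite -cats1 take_size_cat ?size_tuple // cats1.
have mono : cols_span G g -> cols_span G (rcons g x).
  by apply: cols_span_sub => j jg; rewrite mem_rcons inE jg orbT.
by case: (cols_span G g) mono; case: (cols_span G (rcons g x)) => // /(_ isT).
Qed.

Lemma first0 : (1 <= k)%N -> nb_first_span G 0 = 0.
Proof.
move=> k1; rewrite /nb_first_span card_setsum big1 // => f _.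
case H: (cols_span G f) => //=.
by move: (cols_span_size H); rewrite size_tuple leqn0 => /eqP k0; rewrite k0 in k1.
Qed.

Lemma avoid_count (x : 'I_n) t :
  \sum_(f : t.-tuple 'I_n) (x \notin f : nat) = (n.-1) ^ t.
Proof.
elim: t => [|t IH].
  rewrite (eq_bigr (fun _ => 1)) => [|f _]; last by rewrite tuple0.
  by rewrite big_const card_tuple expn0 /=.
rewrite sum_rcons.
under eq_bigr => y _ do under eq_bigr => g _ do
  rewrite /= mem_rcons inE negb_or.
rewrite (bigD1 x) //= big1 ?add0n; last by move=> g _; rewrite eqxx.
rewrite (eq_bigr (fun _ => n.-1 ^ t)) => [|y yx]; last first.
  by rewrite -IH; apply: eq_bigr => g _; rewrite eq_sym yx.
rewrite sum_nat_const expnS; congr (_ * _).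
by have := cardC1 x; rewrite card_ord => <-; apply: eq_card => y; rewrite !inE.
Qed.

Lemma NS_bound t : (forall s : seq 'I_n, (forall j, j \in s) -> cols_span G s) ->
  (NS t <= n * n.-1 ^ t)%N.
Proof.
move=> Hfull; rewrite /NS card_setsum.
apply: (@leq_trans (\sum_(f : t.-tuple 'I_n) \sum_(x : 'I_n) (x \notin f : nat))).
  apply: leq_sum => f _; case H: (cols_span G f) => //=.
  have [x xf] : exists x, x \notin f.
    apply/existsP; rewrite -negb_forall; apply: contraFN H => /forallP Hf.
    exact: Hfull.
  by rewrite (bigD1 x) //= xf.
rewrite exchange_big /= (eq_bigr (fun _ => n.-1 ^ t)) => [|x _]; last exact: avoid_count.
by rewrite sum_nat_const card_ord.
Qed.

Variable d : nat.
Hypothesis rG : \rank G = k.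
Hypothesis md : is_min_dist G d.

Lemma d_ge1 : (1 <= d)%N.
Proof.
case: md => [[u [nz <-]] _]; case/matrix0Pn: nz => i [j Hij].
by apply/card_gt0P; exists j; rewrite inE -(ord1 i).
Qed.

Lemma d_len : (d <= n)%N.
Proof.
case: md => [[u [nz <-]] _]; rewrite /hweight.
by apply: leq_trans (max_card _) _; rewrite card_ord.
Qed.

Lemma nonspan_size S : ~~ spanS S -> (#|S| <= n - d)%N.
Proof.
move=> nS; have [u [nz Hu]] := not_span_codeword rG nS.
case: md => _ /(_ u nz) dle.
have : (hweight (u *m G) <= #|~: S|)%N.
  apply: subset_leq_card; apply/fintype.subsetP => j; rewrite !inE; apply: contra => jS.
  by apply/eqP; apply: Hu; rewrite mem_enum.
have := cardsC S; rewrite card_ord => E.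
move=> H; have := leq_trans dle H; move: E; lia.
Qed.
End Counting.

Local Open Scope classical_set_scope.
Local Open Scope ring_scope.

Section Anal.
Variables (R : realType) (n : nat).
Hypothesis n0 : (0 < n)%N.

Lemma cvg_sum_seq (I : eqType) (r : seq I) (P : pred I) (f : I -> nat -> R) (l : I -> R) :
  (forall i, P i -> f i @ \oo --> l i) ->
  (fun N => \sum_(i <- r | P i) f i N) @ \oo --> \sum_(i <- r | P i) l i.
Proof.
move=> H; elim: r => [|i r IH].
  rewrite big_nil; under eq_cvg do rewrite big_nil; exact: cvg_cst.
rewrite big_cons; under eq_cvg do rewrite big_cons.
case: ifPn => Pi //; exact: cvgD (H _ Pi) IH.
Qed.

Definition aS (S : {set 'I_n}) t : R := (surjc S t)%:R / (n ^ t)%:R.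

Lemma a_ge0 S t : 0 <= aS S t.
Proof. by rewrite /aS divr_ge0. Qed.

Lemma nR0 : n%:R != 0 :> R.
Proof. by rewrite pnatr_eq0 -lt0n. Qed.

Lemma nXR0 t : (n ^ t)%:R != 0 :> R.
Proof. by rewrite pnatr_eq0 expn_eq0 negb_and -lt0n n0. Qed.

Lemma a_rec S t : aS S t.+1 =
  #|S|%:R / n%:R * aS S t + n%:R^-1 * \sum_(x in S) aS (S :\ x) t.
Proof.
rewrite /aS surjc_rec natrD natrM natr_sum expnS natrM mulrDl; congr (_ + _).
  by field; rewrite nR0 nXR0.
rewrite mulr_sumr mulr_suml; apply: eq_bigr => x _.
by field; rewrite nR0 nXR0.
Qed.

Lemma series_rec S N : series (aS S) N.+1 =
  aS S 0 + #|S|%:R / n%:R * series (aS S) N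
    + n%:R^-1 * \sum_(x in S) series (aS (S :\ x)) N.
Proof.
rewrite /series /= big_nat_recl //.
under eq_bigr do rewrite a_rec.
rewrite big_split /= -!mulr_sumr addrA; congr (_ + _ + _ * _).
by rewrite exchange_big.
Qed.

Lemma cvg_a_step (S : {set 'I_n}) (L : R) : (#|S| < n)%N ->
  (forall x, x \in S -> series (aS (S :\ x)) @ \oo --> L) ->
  series (aS S) @ \oo --> (aS S 0 * n%:R + #|S|%:R * L) / (n%:R - #|S|%:R).
Proof.
move=> Sn HL.
set s := #|S|; set e := series (aS S).
have sn : s%:R < n%:R :> R by rewrite ltr_nat.
have nsR : n%:R - s%:R != 0 :> R by rewrite subr_eq0 gt_eqF.
have nR : 0 < n%:R :> R by rewrite ltr0n.
have ndec : nondecreasing_seq e.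
  by apply/nondecreasing_seqP => N; rewrite /e seriesSr lerDl a_ge0.
have exL : forall x N, x \in S -> series (aS (S :\ x)) N <= L.
  move=> x N xS; have := HL x xS => H.
  rewrite -(cvg_lim _ H) //; apply: nondecreasing_cvgn_le; last exact: cvgP H.
  by apply/nondecreasing_seqP => M; rewrite seriesSr lerDl a_ge0.
set B := (aS S 0 * n%:R + s%:R * L) / (n%:R - s%:R).
have eB : forall N, e N <= B.
  move=> N; have h1 := ndec N N.+1 (leqnSn N).
  rewrite /e series_rec -/e in h1.
  have h2 : n%:R^-1 * \sum_(x in S) series (aS (S :\ x)) N <= n%:R^-1 * (s%:R * L).
    rewrite ler_pM2l ?invr_gt0 //.
    by apply: le_trans (ler_sum _ (fun x xS => exL x N xS)) _; rewrite sumr_const mulr_natl.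
  have h3 : e N * (n%:R - s%:R) <= aS S 0 * n%:R + s%:R * L.
    have : e N <= aS S 0 + s%:R / n%:R * e N + n%:R^-1 * (s%:R * L).
      by apply: le_trans h1 _; rewrite lerD2l.
    move=> h; rewrite -(ler_pM2r nR) in h.
    have E : (aS S 0 + s%:R / n%:R * e N + n%:R^-1 * (s%:R * L)) * n%:R
      = aS S 0 * n%:R + s%:R * e N + s%:R * L by field; rewrite nR0.
    rewrite mulrBr lerBlDr; apply: le_trans h _; rewrite E.
    by rewrite le_eqVlt; apply/orP; left; apply/eqP; ring.
  by rewrite /B ler_pdivlMr // subr_gt0.
have ce : cvgn e.
  by apply: nondecreasing_is_cvgn => //; exists B => _ [N _ <-]; exact: eB.
set l := limn e.
have Hr : (fun N => aS S 0 + s%:R / n%:R * e N + n%:R^-1 * \sum_(x in S) series (aS (S :\ x)) N)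
   @ \oo --> aS S 0 + s%:R / n%:R * l + n%:R^-1 * \sum_(x in S) L.
  apply: cvgD; first by apply: cvgD; [exact: cvg_cst | exact: cvgMl_tmp].
  by apply: cvgMl_tmp; apply: cvg_sum_seq.
have Hs : (fun N => e N.+1) @ \oo --> l by rewrite (cvg_shiftS e).
have Efun : (fun N => e N.+1) = (fun N => aS S 0 + s%:R / n%:R * e N
     + n%:R^-1 * \sum_(x in S) series (aS (S :\ x)) N).
  by apply: funext => N; rewrite /e series_rec.
rewrite Efun in Hs.
have El : l = aS S 0 + s%:R / n%:R * l + n%:R^-1 * \sum_(x in S) L.
  exact: cvg_unique Hs Hr.
rewrite sumr_const mulr_natl in El.
have -> : B = l.
  have El2 : l * n%:R = aS S 0 * n%:R + s%:R * l + s%:R * L.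
    by rewrite {1}El; field; exact: nR0.
  rewrite /B -[RHS](mulfK nsR); congr (_ / _).
  by rewrite mulrBr El2; ring.
exact: ce.
Qed.

Lemma cvg_a m : forall S : {set 'I_n}, #|S| = m -> (m < n)%N ->
  series (aS S) @ \oo --> (('C(n.-1, m)%:R)^-1 : R).
Proof.
elim: m => [|m IH] S cS mn.
  have S0 : S = finset.set0 by apply/eqP; rewrite -cards_eq0 cS.
  have := @cvg_a_step S 0; rewrite cS; move/(_ mn).
  have -> : (aS S 0 * n%:R + 0%:R * 0) / (n%:R - 0%:R) = ('C(n.-1, 0)%:R)^-1 :> R.
    rewrite /aS surj0 S0 eqxx bin0 /=; field; exact: nR0.
  by apply => x; rewrite S0 inE.
have := @cvg_a_step S (('C(n.-1, m)%:R)^-1 : R); rewrite cS; move/(_ mn).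
have -> : (aS S 0 * n%:R + m.+1%:R * ('C(n.-1, m)%:R)^-1) / (n%:R - m.+1%:R)
   = ('C(n.-1, m.+1)%:R)^-1 :> R.
  have S0 : (S == finset.set0) = false by apply/negbTE; rewrite -cards_eq0 cS.
  rewrite /aS surj0 S0 /= mul0r mul0r add0r.
  have c0 : 'C(n.-1, m)%:R != 0 :> R by rewrite pnatr_eq0 -lt0n bin_gt0; lia.
  have c1 : 'C(n.-1, m.+1)%:R != 0 :> R by rewrite pnatr_eq0 -lt0n bin_gt0; lia.
  have nm : n%:R - m.+1%:R != 0 :> R by rewrite subr_eq0 eqr_nat; lia.
  have Hb := mul_bin_left n.-1 m.
  have Hc : 'C(n.-1, m.+1)%:R = (n%:R - m.+1%:R) * 'C(n.-1, m)%:R / m.+1%:R :> R.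
    have -> : n%:R - m.+1%:R = (n.-1 - m)%N%:R :> R.
      have nE : n%:R = (n.-1)%:R + 1 :> R by rewrite natr1 prednK.
      rewrite natrB; last lia.
      by rewrite nE -natr1; ring.
    by rewrite -natrM -Hb natrM; field.
  by rewrite Hc; field; rewrite (addrC 1) natr1 c0 nm pnatr_eq0.
apply => x xS; apply: IH; last by lia.
by have := cardsD1 x S; rewrite xS cS add1n => -[].
Qed.
End Anal.

Lemma nw_le (R : realType) (w : R) N : 0 <= w <= 1 ->
  N%:R * w ^+ N <= \sum_(i < N) w ^+ i.
Proof.
case/andP => w0 w1; elim: N => [|N IH]; first by rewrite mul0r big_ord0.
rewrite big_ord_recr /= -natr1 mulrDl mul1r.
have h : w ^+ N.+1 <= w ^+ N by rewrite exprS ler_piMl // exprn_ge0.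
apply: lerD => //; apply: le_trans IH.
by rewrite ler_wpM2l.
Qed.

Lemma geo_le (R : realType) (w : R) N : 0 <= w < 1 ->
  (\sum_(i < N) w ^+ i) * (1 - w) <= 1.
Proof.
case/andP => w0 w1.
have := subrXX 1 w N; rewrite expr1n.
under eq_bigr do rewrite expr1n mul1r.
rewrite mulrC => <-; rewrite lerBlDr lerDl exprn_ge0 //.
Qed.

Lemma cvg_nexp (R : realType) (r : R) : 0 <= r < 1 ->
  (fun N => N%:R * r ^+ N) @ \oo --> 0.
Proof.
case/andP => r0 r1.
set w := (1 + r) / 2.
have w0 : 0 <= w by rewrite /w; lra.
have w1 : w < 1 by rewrite /w; lra.
have rw : r <= w ^+ 2.
  rewrite /w expr2; nra.
apply: (@squeeze_cvgr _ _ _ _ (cst 0) (fun N => w ^+ N / (1 - w))); last 2 first.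
- exact: cvg_cst.
- rewrite -(mul0r (1 - w)^-1); apply: cvgMr_tmp; apply: cvg_expr.
  by rewrite ger0_norm.
apply: nearW => N /=; rewrite mulr_ge0 ?exprn_ge0 //=.
have h1 : r ^+ N <= w ^+ 2 ^+ N by apply: lerXn2r => //; rewrite nnegrE // exprn_ge0.
rewrite -exprM mulnC exprM expr2 in h1.
apply: le_trans (ler_wpM2l (ler0n _ N) h1) _.
rewrite mulrA ler_pdivlMr ?subr_gt0 // mulrAC.
apply: ler_piMl; first exact: exprn_ge0.
have wb : 0 <= w < 1 by rewrite w0 w1.
apply: le_trans (geo_le N wb).
apply: ler_wpM2r; first by rewrite subr_ge0 ltW.
by apply: nw_le; rewrite w0 ltW.
Qed.

Local Close Scope classical_set_scope.

Section Main.
Variables (R : realType) (F : finFieldType) (k n d : nat) (G : 'M[F]_(k, n)).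
Hypotheses (k2 : (2 <= k)%N) (kn : (k <= n)%N) (rG : \rank G = k)
  (md : is_min_dist G d).

Lemma n0 : (0 < n)%N. Proof. lia. Qed.

Lemma full_span (s : seq 'I_n) : (forall j, j \in s) -> cols_span G s.
Proof.
move=> Hs; apply/negPn/negP; rewrite cols_span_set => ns.
have := nonspan_size rG md ns.
have -> : sset s = [set: 'I_n] by apply/setP => j; rewrite !inE Hs.
rewrite cardsT card_ord; have := d_ge1 md; lia.
Qed.

Local Open Scope classical_set_scope.
Definition A t : R := (NS G t)%:R / (n ^ t)%:R.

Lemma expS t : exp_term G t.+1 = t.+1%:R * (A t - A t.+1).
Proof.
rewrite /exp_term /prob_first_span /A.
have -> : (nb_first_span G t.+1)%:R = (n * NS G t)%:R - (NS G t.+1)%:R :> R.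
  by rewrite -(first_rec G t) natrD addrK.
rewrite expnS !natrM; congr (_ * _); field.
by rewrite (nR0 R n0) (nXR0 R n0).
Qed.

Lemma series_exp N : series (exp_term G) N.+1 = series A N - N%:R * A N.
Proof.
elim: N => [|N IH].
  by rewrite seriesSr /series /= !big_geq // /exp_term !mul0r subr0 add0r.
rewrite seriesSr IH expS seriesSr -natr1; ring.
Qed.

Lemma series_A N : series A N =
  \sum_(S | ~~ spanS G S) series (aS R S) N.
Proof.
rewrite /series /= exchange_big /=; apply: eq_bigr => t _.
by rewrite /A NS_dec natr_sum mulr_suml.
Qed.

Lemma cvg_series_A : series A @ \oo -->
  (\sum_(S | ~~ spanS G S) ('C(n.-1, #|S|)%:R)^-1 : R).
Proof.
have -> : series A = fun N => \sum_(S | ~~ spanS G S) series (aS R S) N.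
  by apply: funext => N; rewrite series_A.
apply: cvg_sum_seq => S nS; apply: (cvg_a n0) => //.
have := nonspan_size rG md nS; have := d_ge1 md; lia.
Qed.

Lemma cvg_NA : (fun N => N%:R * A N) @ \oo --> (0 : R).
Proof.
set r : R := (n.-1)%:R / n%:R.
have nR : 0 < n%:R :> R by rewrite ltr0n n0.
have r01 : 0 <= r < 1.
  rewrite divr_ge0 //= ltr_pdivrMr // mul1r ltr_nat; lia.
apply: (@squeeze_cvgr _ _ _ _ (cst 0) (fun N => n%:R * (N%:R * r ^+ N))); last 2 first.
- exact: cvg_cst.
- rewrite -(mulr0 n%:R); apply: cvgMl_tmp; exact: cvg_nexp.
apply: nearW => N /=; rewrite mulr_ge0 ?divr_ge0 //=.
have HA : A N <= n%:R * r ^+ N.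
  rewrite /A /r expr_div_n mulrA natrX ler_pM2r ?invr_gt0 ?exprn_gt0 //.
  rewrite -natrX -natrM ler_nat.
  by apply: NS_bound; exact: full_span.
rewrite [X in _ <= X]mulrCA; apply: ler_wpM2l => //.
Qed.

Lemma harm_diff : (1 <= d)%N -> (d <= n)%N ->
  harmH n - harmH d.-1 = \sum_(0 <= s < (n - d).+1) ((n - s)%:R)^-1 :> R.
Proof.
move=> d1 dn; rewrite /harmH prednK // (big_cat_nat _ (n:=d)) //=; last lia.
rewrite addrC addrK big_nat_rev /= -{1}[d]add0n big_addn.
have -> : (n.+1 - d = (n - d).+1)%N by lia.
by apply: eq_bigr => i _; congr (_^-1); congr (_%:R); lia.
Qed.

Lemma alpha0 s : (s < k)%N -> alpha G s = 0%N.
Proof.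
move=> sk; rewrite /alpha card_setsum big1 // => S _.
case E: (#|S| == s) => //=; case H: (cols_span G (enum S)) => //.
by move: (cols_span_size H); rewrite -cardE (eqP E); lia.
Qed.

Lemma count_nonspan s :
  (#|[set S : {set 'I_n} | (#|S| == s) && ~~ spanS G S]%SET| + alpha G s = 'C(n, s))%N.
Proof.
have := card_draws 'I_n s; rewrite card_ord => <-.
rewrite /alpha !card_setsum -big_split /=; apply: eq_bigr => S _.
by rewrite /spanS; case: (#|S| == s); case: (cols_span G (enum S)).
Qed.

Lemma final_id :
  \sum_(S | ~~ spanS G S) ('C(n.-1, #|S|)%:R)^-1 =
  n%:R * (harmH n - harmH d.-1)
  - \sum_(k <= s < (n - d).+1) (alpha G s)%:R / ('C(n.-1, s))%:R :> R.
Proof.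
set m := (n - d).+1.
set g := fun s => ('C(n.-1, s)%:R)^-1 : R.
have d1 := d_ge1 md; have dn := d_len md.
have step1 : \sum_(S | ~~ spanS G S) g #|S| =
    \sum_(0 <= s < m) (('C(n, s))%:R - (alpha G s)%:R) * g s.
  rewrite big_mkcond /=.
  transitivity (\sum_(S : {set 'I_n}) \sum_(0 <= s < m)
       (if (#|S| == s) && ~~ spanS G S then g s else 0)).
    apply: eq_bigr => S _; case: ifPn => nS; last first.
      by rewrite big1 // => s _; rewrite andbF.
    have Sm : (#|S| < m)%N by have := nonspan_size rG md nS; rewrite /m; lia.
    rewrite (bigD1_seq #|S|) ?mem_index_iota ?iota_uniq //= eqxx big1 ?addr0 //.
    by move=> s; rewrite eq_sym => /negbTE ->.
  rewrite exchange_big /=; apply: eq_bigr => s _.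
  rewrite -big_mkcond /= sumr_const -[LHS]mulr_natr mulrC; congr (_ * _).
  have := count_nonspan s; rewrite cardsE => <-.
  by rewrite natrD addrK.
have -> : \sum_(S | ~~ spanS G S) ('C(n.-1, #|S|)%:R)^-1 =
   \sum_(S | ~~ spanS G S) g #|S| by [].
rewrite step1; under eq_bigr do rewrite mulrBl.
rewrite sumrB; congr (_ - _).
  rewrite harm_diff // mulr_sumr; apply: eq_big_nat => s /andP[_ sm].
  have sn : (s < n)%N by rewrite /m in sm; lia.
  have E := mul_bin_down n s.
  have ER : n%:R * 'C(n.-1, s)%:R = (n - s)%:R * 'C(n, s)%:R :> R by rewrite -!natrM E.
  have nsz : (n - s)%:R != 0 :> R by rewrite pnatr_eq0; lia.
  have cz : 'C(n.-1, s)%:R != 0 :> R by rewrite pnatr_eq0 -lt0n bin_gt0; lia.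
  rewrite /g -[X in X * _ = _](mulKf nsz) -ER; field.
  by rewrite nsz cz.
case: (leqP k m) => km.
  rewrite (big_cat_nat _ (n:=k)) //= big_nat_cond big1 ?add0r // => s /andP[/andP[_ sk] _].
  by rewrite alpha0 // mul0r.
rewrite [RHS]big_geq; last lia.
rewrite big_nat_cond big1 // => s /andP[/andP[_ sm] _].
by rewrite alpha0 ?mul0r //; lia.
Qed.

Lemma main_sec : series (exp_term G) @ \oo -->
    (n%:R * (harmH n - harmH d.-1)
     - \sum_(k <= s < (n - d).+1) (alpha G s)%:R / ('C(n.-1, s))%:R : R).
Proof.
rewrite -final_id -cvg_shiftS.
have -> : [sequence series (exp_term G) N.+1]_N = (fun N => series A N - N%:R * A N) :> (nat -> R).
  by apply: funext => N; rewrite /= series_exp.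
have H := cvgB cvg_series_A cvg_NA; rewrite subr0 in H; exact: H.
Qed.
End Main.

Unset Implicit Arguments.
Local Open Scope classical_set_scope.
Local Open Scope ring_scope.

Theorem mainTheorem7 (R : realType) (F : finFieldType) (k n d : nat)
  (G : 'M[F]_(k, n)) :
  (2 <= k)%N -> (k <= n)%N -> \rank G = k -> is_min_dist G d ->
  series (@exp_term R F k n G) @ \oo -->
    (n%:R * (harmH n - harmH d.-1)
     - \sum_(k <= s < (n - d).+1) (alpha G s)%:R / ('C(n.-1, s))%:R : R).
Proof.
move=> k2 kn rG md; exact: main_sec.
Qed.
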